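(* Fix $x,t>0$ and let $\tau_1$ be a minimizer of $\tau\mapsto G(\tau,x,t)$ on $[0,\infty)$. Let $(\bar x,\bar t)\ne(x,t)$ be any point on the line segment joining $(x,t)$ and $(0,\tau_1)$. Then the minimizer of $\tau\mapsto G(\tau,\bar x,\bar t)$ on $[0,\infty)$ is unique and equals $\tau_1$.
   Context: Standing assumptions: $u_b:[0,\infty)\to(0,\infty)$ bounded measurable and positive; $\rho_b:[0,\infty)\to(0,\infty)$ positive locally bounded measurable. For $x,t,\tau\ge0$: $G(\tau,x,t)=\int_0^\tau[x-u_b(\eta)(t-\eta)]\rho_b(\eta)u_b(\eta)\,d\eta$. *)

(* Defs.v *)
From HB Require Import structures.
From mathcomp Require Import all_boot all_order all_algebra.
From mathcomp Require Import all_classical all_reals all_analysis.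
Set Implicit Arguments. Unset Strict Implicit. Unset Printing Implicit Defensive.
Import Order.TTheory GRing.Theory Num.Theory.
Import numFieldNormedType.Exports.
Local Open Scope classical_set_scope.
Local Open Scope ring_scope.

Definition G (R : realType) (ub rhob : R -> R) (tau x t : R) : R :=
  Rintegral lebesgue_measure `[0, tau]
    (fun eta => (x - ub eta * (t - eta)) * rhob eta * ub eta).

Definition ub_admissible (R : realType) (ub : R -> R) : Prop :=
  [/\ measurable_fun (`[0, +oo[ : set R) ub,
      (exists M : R, forall eta : R, 0 <= eta -> ub eta <= M) &
      (forall eta : R, 0 <= eta -> 0 < ub eta)].

Definition rhob_admissible (R : realType) (rhob : R -> R) : Prop :=
  [/\ measurable_fun (`[0, +oo[ : set R) rhob,
      (forall T : R, exists M : R, forall eta : R, 0 <= eta <= T -> rhob eta <= M) &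
      (forall eta : R, 0 <= eta -> 0 < rhob eta)].

Definition is_minimizer (R : realType) (ub rhob : R -> R) (x t tau0 : R) : Prop :=
  0 <= tau0 /\ forall tau : R, 0 <= tau -> G ub rhob tau0 x t <= G ub rhob tau x t.

(* Main.v *)
Require Import Defs.
From HB Require Import structures.
From mathcomp Require Import all_boot all_order all_algebra.
From mathcomp Require Import all_classical all_reals all_analysis.
From mathcomp Require Import ring lra.
Import Order.TTheory GRing.Theory Num.Theory.
Import numFieldNormedType.Exports.
Local Open Scope classical_set_scope.
Local Open Scope ring_scope.
Set Implicit Arguments. Unset Strict Implicit.

Section S.
Context (R : realType) (ub rhob : R -> R).
Hypothesis hu : ub_admissible ub.
Hypothesis hr : rhob_admissible rhob.

Definition FF (a b : R) := fun eta : R => (a - ub eta * (b - eta)) * rhob eta * ub eta.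

Lemma FF_meas a b (D : set R) : measurable D -> D `<=` `[0, +oo[ ->
  measurable_fun D (FF a b).
Proof.
move=> mD DS.
case: hu => mu _ _; case: hr => mr _ _.
have mu' := measurable_funS (measurable_itv _) DS mu.
have mr' := measurable_funS (measurable_itv _) DS mr.
apply: measurable_realfun.measurable_funM => //; apply: measurable_realfun.measurable_funM => //.
apply: measurable_realfun.measurable_funB => //; apply: measurable_realfun.measurable_funM => //.
apply: measurable_realfun.measurable_funB => //.
Qed.

Lemma FF_int a b tau : 0 <= tau ->
  lebesgue_measure.-integrable `[0, tau] (EFin \o FF a b).
Proof.
move=> t0.
have sub : `[0, tau] `<=` `[0, +oo[.
  by move=> y /=; rewrite !in_itv /= => /andP[-> _].
apply: measurable_bounded_integrable.
- exact: measurable_itv.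
- change (lebesgue_measure (`[0%R, tau] : set R) < +oo)%E.
  by rewrite lebesgue_measure_itv /= lte_fin; case: ifP => _; rewrite ?ltry.
- exact: (@FF_meas a b _ (measurable_itv _) sub).
case: hu => _ [Mu hMu] upos; case: hr => _ hMr rpos.
have [Mr hMr'] := hMr tau.
have Bnd : forall y, y \in `[0, tau] -> `|FF a b y| <= (`|a| + Mu * (`|b| + tau)) * Mr * Mu.
  move=> y; rewrite in_itv /= => /andP[y0 yt].
  have u0 := upos y y0; have r0 := rpos y y0.
  have uM := hMu y y0; have rM : rhob y <= Mr by apply: hMr'; rewrite y0 yt.
  rewrite /FF !normrM (gtr0_norm u0) (gtr0_norm r0).
  have h1 : `|a - ub y * (b - y)| <= `|a| + Mu * (`|b| + tau).
    rewrite (le_trans (ler_normB _ _))// lerD2l normrM (gtr0_norm u0).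
    apply: ler_pM => //; first exact: ltW.
    rewrite (le_trans (ler_normB _ _))// lerD2l ger0_norm //.
  apply: (ler_pM _ _ _ uM); [by apply: mulr_ge0 => //; exact: ltW| exact: ltW|].
  apply: ler_pM => //; exact: ltW.
rewrite /bounded_near; near=> M => y Ay /=.
apply: le_trans (Bnd y Ay) _; near: M; apply: nbhs_pinfty_ge; exact: num_real.
Unshelve. all: by end_near. Qed.

End S.
Lemma Rint_pos (R : realType) (g : R -> R) (a b : R) : a < b ->
  lebesgue_measure.-integrable `]a, b] (EFin \o g) ->
  (forall y, a < y -> y <= b -> 0 <= g y) ->
  (forall y, a < y -> y < b -> 0 < g y) ->
  0 < Rintegral lebesgue_measure `]a, b] g.
Proof.
move=> ab ig gge gpos.
have mD : measurable (`]a, b] : set (measurableTypeR R)) by exact: measurable_itv.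
have mD' : measurable (`]a, b[ : set (measurableTypeR R)) by exact: measurable_itv.
have ge0 : 0 <= Rintegral lebesgue_measure `]a, b] g.
  apply: Rintegral_ge0 => y; rewrite /= in_itv /= => /andP[ay yb].
  exact: (gge y ay yb).
rewrite lt_neqAle ge0 andbT; apply/negP => /eqP H0.
have fin := integrable_fin_num mD ig.
have I0 : (\int[lebesgue_measure]_(x in `]a, b]) (EFin \o g) x = 0)%E.
  by rewrite -(fineK fin) /=; rewrite /Rintegral in H0; rewrite -H0.
move: (ig) => /integrableP [mg _].
have Iabs : (\int[lebesgue_measure]_(x in `]a, b]) `|(EFin \o g) x| = 0)%E.
  rewrite -I0; apply: eq_integral => y; rewrite inE /= in_itv /= => /andP[ay yb].
  by rewrite ger0_norm // gge.
have := (ae_eq_integral_abs _ mD mg).1 Iabs.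
case=> N [mN N0 sub].
have DN : `]a, b[ `<=` N.
  move=> y; rewrite /= in_itv /= => /andP[ay yb].
  have Dy : (`]a, b]%classic : set R) y by rewrite /= in_itv /= ay ltW.
  apply: sub => /(_ Dy) /= [] gy.
  by have := gpos y ay yb; rewrite gy ltxx.
have := subset_measure0 mD' mN DN N0.
change (lebesgue_measure (`]a, b[ : set R) = 0%E -> False).
rewrite lebesgue_measure_itv /= lte_fin ab => /eqP.
by rewrite -EFinD eqe subr_eq0 => /eqP ba; move: ab; rewrite ba ltxx.
Qed.

Lemma int_scale (R : realType) (D : set R) (f : R -> R) (k : R) :
  measurable (D : set (measurableTypeR R)) ->
  lebesgue_measure.-integrable D (EFin \o f) ->
  lebesgue_measure.-integrable D (EFin \o (fun x => k * f x)).
Proof.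
move=> mD hf; have := integrableZl mD k hf.
by have -> : (fun x => (k%:E * (EFin \o f) x)%E) = EFin \o (fun x => k * f x)
  by apply/funext => y /=; rewrite EFinM.
Qed.

Lemma G_FF (R : realType) (ub rhob : R -> R) tau a b :
  G ub rhob tau a b = Rintegral lebesgue_measure `[0, tau] (FF ub rhob a b).
Proof. by []. Qed.

Theorem lemma2p4 (R : realType) (ub rhob : R -> R) (x t tau1 xb tb s : R) :
  ub_admissible ub -> rhob_admissible rhob ->
  0 < x -> 0 < t ->
  is_minimizer ub rhob x t tau1 ->
  0 <= s <= 1 ->
  xb = (1 - s) * x + s * 0 ->
  tb = (1 - s) * t + s * tau1 ->
  (xb, tb) <> (x, t) ->
  is_minimizer ub rhob xb tb tau1 /\
  (forall tau : R, is_minimizer ub rhob xb tb tau -> tau = tau1).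
Proof.
move=> hu hr x0 t0 [tau10 tau1min] /andP[s0 s1] exb etb neq.
have mI : forall tau : R, measurable (`[0, tau] : set (measurableTypeR R)).
  by move=> tau; exact: measurable_itv.
have decomp : forall tau, 0 <= tau ->
    G ub rhob tau xb tb = (1 - s) * G ub rhob tau x t + s * G ub rhob tau 0 tau1.
  move=> tau tau0; rewrite !G_FF.
  have -> : FF ub rhob xb tb = (fun y => (1 - s) * FF ub rhob x t y + s * FF ub rhob 0 tau1 y).
    by apply/funext => y; rewrite /FF exb etb; ring.
  rewrite RintegralD //; last 2 first.
  - exact/int_scale/FF_int.
  - exact/int_scale/FF_int.
  by rewrite !RintegralZl //; exact: FF_int.
have upos : forall y, 0 <= y -> 0 < ub y by case: hu.
have rpos : forall y, 0 <= y -> 0 < rhob y by case: hr.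
have gpos : forall y, tau1 < y -> 0 < FF ub rhob 0 tau1 y.
  move=> y ty; have y0 : 0 <= y by rewrite ltW // (le_lt_trans tau10 ty).
  rewrite /FF; apply: mulr_gt0; last exact: upos.
  apply: mulr_gt0; last exact: rpos.
  by rewrite sub0r -mulrN opprB mulr_gt0 // ?upos // subr_gt0.
have gneg : forall y, 0 <= y -> y < tau1 -> 0 < -1 * FF ub rhob 0 tau1 y.
  move=> y y0 ty; rewrite mulN1r -mulNr -mulNr /FF.
  apply: mulr_gt0; last exact: upos.
  apply: mulr_gt0; last exact: rpos.
  by rewrite sub0r opprK mulr_gt0 // ?upos // subr_gt0.
have strict : forall tau, 0 <= tau -> tau != tau1 ->
    G ub rhob tau1 0 tau1 < G ub rhob tau 0 tau1.
  move=> tau tau0; rewrite neq_lt => /orP[tlt|tgt].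
  - have E := @Rintegral_itvB R (FF ub rhob 0 tau1) (BLeft 0) (BRight tau1) tau
      (FF_int hu hr 0 tau1 tau10).
    rewrite !bnd_simp in E.
    have {}E := E tau0 (ltW tlt).
    have P := @Rint_pos R (fun y => -1 * FF ub rhob 0 tau1 y) tau tau1 tlt.
    have iS : lebesgue_measure.-integrable `]tau, tau1] (EFin \o FF ub rhob 0 tau1).
      apply: integrableS (FF_int hu hr 0 tau1 tau10) => //.
      by apply: subset_itvr; rewrite bnd_simp.
    have mD' : measurable (`]tau, tau1] : set (measurableTypeR R)) by exact: measurable_itv.
    have y0 : forall y, tau < y -> 0 <= y by move=> y ty; rewrite ltW // (le_lt_trans tau0 ty).
    have h1 : forall y, tau < y -> y <= tau1 -> 0 <= -1 * FF ub rhob 0 tau1 y.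
      move=> y ty yt1; rewrite le_eqVlt in yt1; case/orP: yt1 => [/eqP ->|yt1].
        by rewrite /FF subrr mulr0 subrr !mul0r mulr0.
      exact/ltW/gneg/yt1/y0.
    have h2 : forall y, tau < y -> y < tau1 -> 0 < -1 * FF ub rhob 0 tau1 y.
      by move=> y ty yt1; apply: gneg => //; exact: y0.
    have P' := P (int_scale (-1) mD' iS) h1 h2.
    rewrite (RintegralZl (-1) mD' iS) -E in P'.
    rewrite !G_FF; lra.
  - have E := @Rintegral_itvB R (FF ub rhob 0 tau1) (BLeft 0) (BRight tau) tau1
      (FF_int hu hr 0 tau1 tau0).
    rewrite !bnd_simp in E.
    have {}E := E tau10 (ltW tgt).
    rewrite -subr_gt0 !G_FF E.
    apply: Rint_pos => //; [|by move=> y ty _; exact/ltW/gpos|by move=> y ty _; exact: gpos].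
    apply: integrableS (FF_int hu hr 0 tau1 tau0) => //.
    by apply: subset_itvr; rewrite bnd_simp.
have spos : 0 < s.
  rewrite le_eqVlt in s0; case/orP: s0 => [/eqP s0'|//].
  exfalso; apply: neq; rewrite exb etb -s0'; congr pair; ring.
have Hle : forall tau, 0 <= tau -> G ub rhob tau1 0 tau1 <= G ub rhob tau 0 tau1.
  move=> tau tau0; case: (eqVneq tau tau1) => [->//|ne].
  exact/ltW/strict.
split.
  split => // tau tau0; rewrite !decomp //.
  have := tau1min tau tau0; have := Hle tau tau0; nra.
move=> tau [tau0 taumin]; case: (eqVneq tau tau1) => // ne; exfalso.
have := strict tau tau0 ne; have := taumin tau1 tau10; rewrite !decomp //.
have := tau1min tau tau0; nra.
Qed.
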